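(* (1) The natural numbers $n$ (identified with the sets $[n]$) as objects, together with the Kleisli arrows $f:[m]\to T([n])$ that satisfy the realizability condition, form a subcategory of the Kleisli category $\mathrm{Kl}(T)$ of the play monad; this subcategory is $\mathbb S^{\mathbb P}_r$ (its composition being the composition of $\mathbb S^{\mathbb P}_r$). (2) $\mathbb S^{\mathbb P}_r$ inherits from $\mathrm{Kl}(T)$ the symmetric monoidal structure whose monoidal product is the coproduct.
   Context: Notation: $[k]=\{1,\dots,k\}$. The play monad $(T,\eta,\mu)$ on $\mathbf{Set}$: $T(X)=X+\mathbb R\times X+\{\exists^*\}+\{\forall^*\}$, with $T(g)$ acting by $x\mapsto g(x)$, $(r,x)\mapsto(r,g(x))$, fixing $\exists^*,\forall^*$; $\eta_X(x)=x$; $\mu_X:T(T(X))\to T(X)$ sends elements of the first summand $T(X)$ to themselves, $\exists^*\mapsto\exists^*$, $\forall^*\mapsto\forall^*$, and on $\mathbb R\times T(X)$: $(r,x)\mapsto(r,x)$ for $x\in X$, $(r,(q,x))\mapsto(r+q,x)$, $(r,\exists^* )\mapsto\exists^*$, $(r,\forall^* )\mapsto\forall^*$. $\mathrm{Kl}(T)$ has sets as objects and functions $X\to T(Y)$ as arrows $X\to Y$, with Kleisli composition. Realizability condition for $f:[m]\to T([n])$: if $f(i)=k\in[n]$ then for every $j\in[m]\setminus\{i\}$, $f(j)\ne k$ and $f(j)\ne(r,k)$ for all $r\in\mathbb R$. $\mathbb S^{\mathbb P}_r$: objects natural numbers; arrows $m\to n$ are functions $f:[m]\to T([n])$ satisfying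 realizability; composition of $f:m\to l$, $g:l\to n$ (diagrammatic): $(f;g)(i)=f(i)$ if $f(i)\in\{\exists^*,\forall^*\}$; $g(j)$ if $f(i)=j\in[l]$; $g(j)$ if $f(i)=(r,j)$ and $g(j)\in\{\exists^*,\forall^*\}$; $(r,k)$ if $f(i)=(r,j)$, $g(j)=k\in[n]$; $(r+r',k)$ if $f(i)=(r,j)$, $g(j)=(r',k)$; identity $i\mapsto i$. Coproducts $[m]+[k]$ are identified with $[m+k]$ in the standard way. *)

(* Defs.v *)
From Stdlib Require Import Reals.
From mathcomp Require Import all_boot.
Set Implicit Arguments. Unset Strict Implicit. Unset Printing Implicit Defensive.

Inductive play (X : Type) : Type :=
| Pure : X -> play X
| Pay  : R -> X -> play X
| ExStar : play X
| AllStar : play X.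
Arguments ExStar {X}. Arguments AllStar {X}.

Definition Tmap {X Y : Type} (g : X -> Y) (t : play X) : play Y :=
  match t with
  | Pure x => Pure (g x)
  | Pay r x => Pay r (g x)
  | ExStar => ExStar
  | AllStar => AllStar
  end.

Definition eta {X : Type} (x : X) : play X := Pure x.

Definition mu {X : Type} (t : play (play X)) : play X :=
  match t with
  | Pure u => u
  | Pay r (Pure x) => Pay r x
  | Pay r (Pay q x) => Pay (Rplus r q) x
  | Pay _ ExStar => ExStar
  | Pay _ AllStar => AllStar
  | ExStar => ExStar
  | AllStar => AllStar
  end.

Definition kcomp {X Y Z : Type} (f : X -> play Y) (g : Y -> play Z) : X -> play Z :=
  fun x => mu (Tmap g (f x)).

Definition realizable {X Y : Type} (f : X -> play Y) : Prop :=
  forall i k, f i = Pure k ->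
    forall j, j <> i -> f j <> Pure k /\ (forall r, f j <> Pay r k).

(* The composition of S^P_r, as given by its case table *)
Definition scomp {m l n : nat} (f : 'I_m -> play 'I_l) (g : 'I_l -> play 'I_n)
  : 'I_m -> play 'I_n :=
  fun i =>
    match f i with
    | ExStar => ExStar
    | AllStar => AllStar
    | Pure j => g j
    | Pay r j =>
        match g j with
        | ExStar => ExStar
        | AllStar => AllStar
        | Pure k => Pay r k
        | Pay r' k => Pay (Rplus r r') k
        end
    end.

Definition sid (n : nat) : 'I_n -> play 'I_n := fun i => Pure i.

(* Coproduct monoidal product in Kl(T), transported along [m]+[k] = [m+k]
   (split / unsplit of fintype). *)
Definition tensor {m m' k k' : nat} (f : 'I_m -> play 'I_m') (g : 'I_k -> play 'I_k')
  : 'I_(m + k) -> play 'I_(m' + k') :=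
  fun i => match split i with
           | inl a => Tmap (@lshift m' k') (f a)
           | inr b => Tmap (@rshift m' k') (g b)
           end.

(* Structural isomorphisms of the cocartesian structure on sets, transported
   along the identification; in Kl(T) they are eta o (these bijections). *)
Definition assoc_ord (m k l : nat) (i : 'I_(m + k + l)) : 'I_(m + (k + l)) :=
  match split i with
  | inl j => match split j with
             | inl a => lshift (k + l) a
             | inr b => rshift m (lshift l b)
             end
  | inr c => rshift m (rshift k c)
  end.

Definition assoc_inv_ord (m k l : nat) (i : 'I_(m + (k + l))) : 'I_(m + k + l) :=
  match split i with
  | inl a => lshift l (lshift k a)
  | inr j => match split j with
             | inl b => lshift l (rshift m b)
             | inr c => rshift (m + k) c
             end
  end.

Definition lunit_ord (m : nat) (i : 'I_(0 + m)) : 'I_m := cast_ord (add0n m) i.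
Definition lunit_inv_ord (m : nat) (i : 'I_m) : 'I_(0 + m) := cast_ord (esym (add0n m)) i.
Definition runit_ord (m : nat) (i : 'I_(m + 0)) : 'I_m := cast_ord (addn0 m) i.
Definition runit_inv_ord (m : nat) (i : 'I_m) : 'I_(m + 0) := cast_ord (esym (addn0 m)) i.

Definition braid_ord (m k : nat) (i : 'I_(m + k)) : 'I_(k + m) :=
  match split i with
  | inl a => rshift k a
  | inr b => lshift m b
  end.

Arguments sid n i : clear implicits.
Arguments assoc_ord m k l i : clear implicits.
Arguments assoc_inv_ord m k l i : clear implicits.
Arguments lunit_ord m i : clear implicits.
Arguments lunit_inv_ord m i : clear implicits.
Arguments runit_ord m i : clear implicits.
Arguments runit_inv_ord m i : clear implicits.
Arguments braid_ord m k i : clear implicits.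

(* Main.v *)
Require Import Defs.
From Stdlib Require Import Reals.
From mathcomp Require Import all_boot.

Lemma real_inj {X Y : Type} (h : X -> Y) : injective h ->
  realizable (fun i => eta (h i)).
Proof.
move=> hi i k [] <- j ji; split; first by case=> /hi.
by move=> r.
Qed.

Lemma val_split_eq m k (i : 'I_(m + k)) : val (unsplit (split i)) = val i.
Proof. by rewrite splitK. Qed.

Lemma assoc_val m k l i : val (assoc_ord m k l i) = val i.
Proof.
rewrite /assoc_ord; case: splitP => [j Ej|c Ec] /=; rewrite ?Ej ?Ec.
  by case: splitP => [a ->|b ->].
by rewrite addnA.
Qed.

Lemma assoc_inv_val m k l i : val (assoc_inv_ord m k l i) = val i.
Proof.
rewrite /assoc_inv_ord; case: splitP => [a Ea|j Ej] /=; rewrite ?Ea ?Ej //.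
case: splitP => [b ->|c ->] //=; by rewrite addnA.
Qed.

Lemma braid_inj m k : injective (braid_ord m k).
Proof.
move=> x y; rewrite /braid_ord.
case: (splitP x) => [a Ex|b Ex]; case: (splitP y) => [a' Ey|b' Ey] /=;
  move/(congr1 val) => /= H; apply/val_inj; rewrite /= Ex Ey.
- by move/eqP: H; rewrite eqn_add2l => /eqP.
- have := ltn_ord b'. by rewrite -H ltnNge leq_addr.
- have := ltn_ord b. by rewrite H ltnNge leq_addr.
- by rewrite H.
Qed.

Theorem propositionB2 :
  (* (1) subcategory of Kl(T): identities and composites of realizable arrows
     are realizable, and the Kleisli identity/composition are those of S^P_r *)
  (forall n : nat, realizable (@eta 'I_n) /\ (forall i : 'I_n, eta i = sid n i)) /\
  (forall (m l n : nat) (f : 'I_m -> play 'I_l) (g : 'I_l -> play 'I_n),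
      realizable f -> realizable g ->
      realizable (kcomp f g) /\ (forall i, kcomp f g i = scomp f g i)) /\
  (* (2) closure under the coproduct monoidal structure of Kl(T) *)
  (forall (m m' k k' : nat) (f : 'I_m -> play 'I_m') (g : 'I_k -> play 'I_k'),
      realizable f -> realizable g -> realizable (tensor f g)) /\
  (forall m k l : nat,
      realizable (fun i => eta (assoc_ord m k l i)) /\
      realizable (fun i => eta (assoc_inv_ord m k l i))) /\
  (forall m : nat,
      realizable (fun i => eta (lunit_ord m i)) /\
      realizable (fun i => eta (lunit_inv_ord m i)) /\
      realizable (fun i => eta (runit_ord m i)) /\
      realizable (fun i => eta (runit_inv_ord m i))) /\
  (forall m k : nat, realizable (fun i => eta (braid_ord m k i))).
Proof.
split.
  move=> n; split=> // ; exact: (@real_inj _ _ id).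
split.
  move=> m l n f g Hf Hg; split; last first.
    move=> i; rewrite /kcomp /scomp; case: (f i) => [j|r j||] //=.
  move=> i k; rewrite /kcomp.
  case Efi: (f i) => [j|r j||] //=; [| by case: (g j)].
  move=> Egj j' ji; split.
  - case Efj': (f j') => [j''|r j''||] //=; [| by case: (g j'')].
    move=> Eg. have [e|ne] := eqVneq j'' j.
      by subst; have [] := Hf _ _ Efi _ ji.
    by have [] := Hg _ _ Egj _ (elimN eqP ne).
  - move=> r.
    case Efj': (f j') => [j''|r' j''||] //=.
      have [e|ne] := eqVneq j'' j.
        by subst; have [] := Hf _ _ Efi _ ji.
      by have [_ ] := Hg _ _ Egj _ (elimN eqP ne).
    have [e|ne] := eqVneq j'' j.
      by subst; have [_ H] := Hf _ _ Efi _ ji; exfalso; apply: (H r').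
    have [H1 H2] := Hg _ _ Egj _ (elimN eqP ne).
    case Eg: (g j'') => [x|q x||] //= [_ E]; subst x.
    + exact: H1.
    + exact: (H2 q).
split.
  move=> m m' k k' f g Hf Hg i x; rewrite /tensor.
  case: (splitP i) => [a Ei|b Ei].
    case Efa: (f a) => [y|||] //= [Ex] j ji.
    case: (splitP j) => [a' Ej|b' Ej].
      have aa : a' <> a by move=> E; apply: ji; apply/val_inj; rewrite /= Ei Ej E.
      have [H1 H2] := Hf _ _ Efa _ aa.
      split.
        case: (f a') H1 H2 => //= z H1 _ [E]; apply: H1; congr Pure.
        by apply/val_inj; move: E; rewrite -Ex => /(congr1 val).
      move=> r; case: (f a') H1 H2 => //= r' z _ H2 [Er E]; apply: (H2 r'); congr Pay.
      by apply/val_inj; move: E; rewrite -Ex => /(congr1 val).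
    have ne : forall z : 'I_k', rshift m' z <> x.
      move=> z E; have := ltn_ord y; move: E; rewrite -Ex => /(congr1 val) /= <-.
      by rewrite ltnNge leq_addr.
    by split; [|move=> r]; case: (g b') => [z|q z||] /= E; try discriminate; injection E => *; apply: (ne z).
  case Egb: (g b) => [y|||] //= [Ex] j ji.
  case: (splitP j) => [a' Ej|b' Ej].
    have ne : forall z : 'I_m', lshift k' z <> x.
      move=> z E; have := ltn_ord z; move: E; rewrite -Ex => /(congr1 val) /= ->.
      by rewrite ltnNge leq_addr.
    by split; [|move=> r]; case: (f a') => [z|q z||] /= E; try discriminate; injection E => *; apply: (ne z).
  have bb : b' <> b.
    move=> E; apply: ji; apply/val_inj; rewrite /= Ei Ej E //.
  have [H1 H2] := Hg _ _ Egb _ bb.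
  split.
    case: (g b') H1 H2 => //= z H1 _ [E]; apply: H1; congr Pure.
    apply/val_inj; move: E; rewrite -Ex => /(congr1 val) /= /eqP.
    by rewrite eqn_add2l => /eqP.
  move=> r; case: (g b') H1 H2 => //= r' z _ H2 [Er E]; apply: (H2 r'); congr Pay.
  apply/val_inj; move: E; rewrite -Ex => /(congr1 val) /= /eqP.
  by rewrite eqn_add2l => /eqP.
split.
  move=> m k l; split; apply: real_inj => x y /(congr1 val);
    rewrite ?assoc_val ?assoc_inv_val; exact: val_inj.
split.
  by move=> m; split; [|split; [|split]]; apply: real_inj => x y /(congr1 val) /= /val_inj.
move=> m k; apply: real_inj; exact: braid_inj.
Qed.
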